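(* Fix $a'\in(-1,1)$. For $d\in(0,\sqrt{1-a'^2})$ let $r=\sqrt{a'^2+d^2}$, $H=-\frac1r-a'$ and $c=\frac{a'}{r}-\frac{d^2}{2}$ (the energy and constant $c$ of the planar Stark solution with $(x(0),y(0))=(a',d)$, $(\dot x(0),\dot y(0))=(0,0)$), and define $$T_\xi=4\int_0^{\xi_1}\frac{d\xi}{\sqrt{\xi^4+2H\xi^2+2(c+1)}},\quad \xi_1^2=-H-\sqrt{H^2-2(c+1)},$$ $$T_\eta=4\int_0^{\eta_1}\frac{d\eta}{\sqrt{-\eta^4+2H\eta^2-2(c-1)}},\quad \eta_1^2=H+\sqrt{H^2-2(c-1)}.$$ Then $T_\xi/T_\eta$ is a monotone function of $d\in(0,\sqrt{1-a'^2})$.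
   Context: $T_\xi$ and $T_\eta$ are the periods, in the regularized time $\tau$ (with $dt=(\xi^2+\eta^2)d\tau$), of the parabolic coordinates $\xi^2=r+x$, $\eta^2=r-x$ of that solution of the planar Stark problem $\ddot x=-x/r^3+1$, $\ddot y=-y/r^3$. *)

(* Defs.v *)
From Stdlib Require Import Reals.
From Coquelicot Require Import Coquelicot.
Open Scope R_scope.

Definition stark_r (a d : R) : R := sqrt (a ^ 2 + d ^ 2).
Definition stark_H (a d : R) : R := - / stark_r a d - a.
Definition stark_c (a d : R) : R := a / stark_r a d - d ^ 2 / 2.

Definition stark_xi1 (a d : R) : R :=
  let H := stark_H a d in let c := stark_c a d in
  sqrt (- H - sqrt (H ^ 2 - 2 * (c + 1))).
Definition stark_eta1 (a d : R) : R :=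
  let H := stark_H a d in let c := stark_c a d in
  sqrt (H + sqrt (H ^ 2 - 2 * (c - 1))).

(* T_xi = 4 * int_0^{xi1} dxi / sqrt(xi^4 + 2 H xi^2 + 2(c+1)),
   an improper integral (integrable singularity at the upper endpoint). *)
Definition T_xi (a d : R) : R :=
  let H := stark_H a d in let c := stark_c a d in
  4 * RInt_gen (fun x : R => / sqrt (x ^ 4 + 2 * H * x ^ 2 + 2 * (c + 1)))
        (at_point 0) (at_left (stark_xi1 a d)).

Definition T_eta (a d : R) : R :=
  let H := stark_H a d in let c := stark_c a d in
  4 * RInt_gen (fun x : R => / sqrt (- x ^ 4 + 2 * H * x ^ 2 - 2 * (c - 1)))
        (at_point 0) (at_left (stark_eta1 a d)).

(* Main.v *)
Require Import Defs.
From Stdlib Require Import Reals Lra Psatz FunctionalExtensionality.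
From Coquelicot Require Import Coquelicot.
Open Scope R_scope.

Lemma pos_lin (A B b s : R) : 0 < B -> 0 < B + b*A -> 0 <= s <= 1 -> 0 < B + b*A*s.
Proof. intros hB hBA [h0 h1].
  replace (B + b*A*s) with ((1-s)*B + s*(B+b*A)) by ring.
  destruct (Rle_lt_or_eq_dec 0 s h0) as [h|h].
  - assert (0 <= (1-s)*B) by (apply Rmult_le_pos; lra). assert (0 < s*(B+b*A)) by (apply Rmult_lt_0_compat; lra). lra.
  - subst; lra. Qed.

Lemma sin2_bounds (t : R) : 0 <= sin t ^ 2 <= 1.
Proof. pose proof (sin2 t). pose proof (Rle_0_sqr (sin t)). pose proof (Rle_0_sqr (cos t)). unfold Rsqr in *. split; nra. Qed.

Definition gfun (A B b : R) (t : R) : R := / sqrt (B + b*A*sin t^2).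

Lemma cont_g (A B b : R) (hB : 0 < B) (hBA : 0 < B + b*A) (th : R) :
  continuous (gfun A B b) th.
Proof.
  assert (hp : 0 < B + b*A*sin th^2) by (apply pos_lin; auto; apply sin2_bounds).
  unfold gfun. apply (@ex_derive_continuous R_AbsRing R_NormedModule). auto_derive.
  repeat split; auto. apply Rgt_not_eq, sqrt_lt_R0; auto.
Qed.

Lemma exRInt_g (A B b : R) (hB : 0 < B) (hBA : 0 < B + b*A) u v : ex_RInt (gfun A B b) u v.
Proof. apply (@ex_RInt_continuous R_CompleteNormedModule); intros; apply cont_g; auto. Qed.

Definition ffun (A B b : R) (x : R) : R := / sqrt ((A - x^2)*(B + b*x^2)).

Lemma cont_f (A B b : R) (hA : 0 < A) (hB : 0 < B) (hBA : 0 < B + b*A) (x : R) :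
  0 <= x < sqrt A -> continuous (ffun A B b) x.
Proof.
  intros [h0 h1].
  assert (hx : x^2 < A).
  { rewrite <- (pow2_sqrt A) by lra. nra. }
  assert (hp1 : 0 < B + b*x^2).
  { replace (B + b*x^2) with (B + b*A*(x^2/A)) by (field; lra). apply pos_lin; auto.
    split. apply Rcomplements.Rdiv_le_0_compat; nra. apply Rcomplements.Rle_div_l; lra. }
  assert (hp : 0 < (A - x^2)*(B + b*x^2)) by (apply Rmult_lt_0_compat; lra).
  unfold ffun. apply (@ex_derive_continuous R_AbsRing R_NormedModule). auto_derive.
  repeat split; auto. apply Rgt_not_eq, sqrt_lt_R0; auto.
Qed.

Lemma step1 (A B b : R) (hA : 0 < A) (hB : 0 < B) (hBA : 0 < B + b*A) (y : R) :
  0 <= y < sqrt A -> is_RInt (ffun A B b) 0 y (RInt (gfun A B b) 0 (asin (y / sqrt A))).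
Proof.
  intros [hy0 hy1].
  set (s := sqrt A) in *.
  assert (hs : 0 < s) by (apply sqrt_lt_R0; auto).
  assert (hs2 : s^2 = A) by (apply pow2_sqrt; lra).
  assert (hq : 0 <= y / s < 1).
  { split. apply Rcomplements.Rdiv_le_0_compat; lra. apply (proj2 (Rcomplements.Rlt_div_l _ _ _ hs)). lra. }
  set (t := asin (y / s)).
  assert (ht : - (PI/2) < t < PI/2) by (apply asin_bound_lt; lra).
  assert (hst : sin t = y / s) by (apply sin_asin; lra).
  assert (ht0 : 0 <= t).
  { destruct (Rle_or_lt 0 t) as [h|h]; auto.
    assert (sin t < sin 0) by (apply sin_increasing_1; lra). rewrite sin_0 in H. lra. }
  assert (Hc := is_RInt_comp (ffun A B b) (fun th => s * sin th) (fun th => s * cos th) 0 t).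
  rewrite Rmin_left in Hc by lra. rewrite Rmax_right in Hc by lra.
  assert (Hc' : is_RInt (fun y0 : R => scal (s * cos y0) (ffun A B b (s * sin y0))) 0 t
        (RInt (ffun A B b) (s * sin 0) (s * sin t))).
  { apply Hc.
    - intros x hx. apply cont_f; auto.
      assert (0 <= sin x) by (apply sin_ge_0; lra).
      assert (sin x < 1) by (rewrite <- sin_PI2; apply sin_increasing_1; lra).
      split; fold s; nra.
    - intros x hx. split.
      + auto_derive; auto. ring.
      + apply (@ex_derive_continuous R_AbsRing R_NormedModule). auto_derive. auto. }
  rewrite sin_0, Rmult_0_r, hst in Hc'.
  replace (s * (y / s)) with y in Hc' by (field; lra).
  assert (Hg : is_RInt (gfun A B b) 0 t (RInt (ffun A B b) 0 y)).
  { refine (is_RInt_ext _ _ _ _ _ _ Hc'). intros x hx.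
    rewrite Rmin_left in hx by lra. rewrite Rmax_right in hx by lra.
    unfold scal; simpl; unfold mult; simpl.
    unfold ffun, gfun.
    assert (hcx : 0 < cos x) by (apply cos_gt_0; lra).
    assert (hP : 0 < B + b*A*sin x^2) by (apply pos_lin; auto; apply sin2_bounds).
    replace ((A - (s * sin x)^2) * (B + b * (s * sin x)^2)) with ((s * cos x)^2 * (B + b*A*sin x^2)).
    2:{ rewrite !Rpow_mult_distr, hs2. pose proof (sin2_cos2 x). unfold Rsqr in *. 
        replace (cos x ^2) with (1 - sin x^2) by nra. ring. }
    rewrite sqrt_mult by nra. rewrite sqrt_pow2 by nra.
    field. split. apply Rgt_not_eq, sqrt_lt_R0; auto. nra. }
  assert (Hg2 := @is_RInt_unique R_CompleteNormedModule _ _ _ _ Hg). simpl in Hg2. rewrite Hg2.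
  apply (@RInt_correct R_CompleteNormedModule).
  apply (@ex_RInt_continuous R_CompleteNormedModule).
  intros z hz. rewrite Rmin_left in hz by lra. rewrite Rmax_right in hz by lra.
  apply cont_f; auto. fold s; lra.
Qed.

Lemma gbound (A B b : R) (hB : 0 < B) (hBA : 0 < B + b*A) (t : R) :
  Rabs (gfun A B b t) <= / sqrt (Rmin B (B + b*A)).
Proof.
  pose proof (sin2_bounds t) as hs.
  assert (hP : 0 < B + b*A*sin t^2) by (apply pos_lin; auto).
  assert (hm : 0 < Rmin B (B + b*A)) by (apply Rmin_case; auto).
  assert (hle : Rmin B (B + b*A) <= B + b*A*sin t^2).
  { pose proof (Rmin_l B (B + b*A)). pose proof (Rmin_r B (B + b*A)).
    replace (B + b*A*sin t^2) with ((1 - sin t^2)*B + sin t^2*(B+b*A)) by ring. nra. }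
  unfold gfun. rewrite Rabs_pos_eq.
  2:{ left. apply Rinv_0_lt_compat, sqrt_lt_R0; auto. }
  apply Rinv_le_contravar. apply sqrt_lt_R0; auto. apply sqrt_le_1_alt; auto.
Qed.

Lemma key (A B b : R) (hA : 0 < A) (hB : 0 < B) (hBA : 0 < B + b*A) :
  is_RInt_gen (ffun A B b) (at_point 0) (at_left (sqrt A)) (RInt (gfun A B b) 0 (PI/2)).
Proof.
  intros P [eps HP].
  set (s := sqrt A) in *.
  assert (hs : 0 < s) by (apply sqrt_lt_R0; auto).
  set (M := / sqrt (Rmin B (B + b*A))).
  assert (hm : 0 < Rmin B (B + b*A)) by (apply Rmin_case; auto).
  assert (hM : 0 < M) by (apply Rinv_0_lt_compat, sqrt_lt_R0; auto).
  assert (he : 0 < eps) by (apply cond_pos).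
  set (h := Rmin (eps / (2*M)) 1).
  assert (hh0 : 0 < h) by (apply Rmin_case; [apply Rdiv_lt_0_compat; lra | lra]).
  assert (hh1 : h <= 1) by apply Rmin_r.
  assert (hh2 : h <= eps / (2*M)) by apply Rmin_l.
  pose proof PI2_1 as hpi.
  set (t0 := PI/2 - h).
  set (b0 := s * sin t0).
  assert (hsin0 : 0 <= sin t0) by (apply sin_ge_0; unfold t0; lra).
  assert (hsin1 : sin t0 < 1) by (rewrite <- sin_PI2; apply sin_increasing_1; unfold t0; lra).
  assert (hb0 : 0 <= b0) by (unfold b0; nra).
  assert (hd : 0 < s - b0) by (unfold b0; nra).
  apply Filter_prod with (Q := fun x => x = 0) (R := fun y => b0 < y < s).
  - reflexivity.
  - exists (mkposreal _ hd). intros y hy hys. simpl in hy.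
    unfold ball in hy; simpl in hy. unfold AbsRing_ball, abs, minus, plus, opp in hy; simpl in hy.
    destruct (Rabs_def2 _ _ hy). lra.
  - intros x y -> [hy1 hy2]. simpl.
    exists (RInt (gfun A B b) 0 (asin (y / s))). split.
    + apply step1; auto. fold s. lra.
    + apply HP. unfold ball; simpl. unfold AbsRing_ball, abs, minus, plus, opp; simpl.
      set (t := asin (y / s)).
      assert (hq : 0 <= y / s < 1).
      { split. apply Rcomplements.Rdiv_le_0_compat; lra. apply (proj2 (Rcomplements.Rlt_div_l _ _ _ hs)). lra. }
      assert (ht : - (PI/2) < t < PI/2) by (apply asin_bound_lt; lra).
      assert (hst : sin t = y / s) by (apply sin_asin; lra).
      assert (htt0 : t0 < t).
      { destruct (Rle_or_lt t t0) as [h1|h1]; auto. exfalso.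
        assert (sin t <= sin t0).
        { destruct (Rle_lt_or_eq_dec _ _ h1) as [h2|h2].
          - left. apply sin_increasing_1; unfold t0 in *; lra.
          - rewrite h2; lra. }
        rewrite hst in H. unfold b0 in hy1.
        assert (y <= s * sin t0).
        { replace y with (s * (y / s)) by (field; lra). apply Rmult_le_compat_l; lra. }
        lra. }
      rewrite <- (RInt_Chasles (gfun A B b) 0 t (PI/2)) by (apply exRInt_g; auto).
      unfold plus; simpl.
      replace (RInt (gfun A B b) 0 t + - (RInt (gfun A B b) 0 t + RInt (gfun A B b) t (PI / 2)))
        with (- RInt (gfun A B b) t (PI / 2)) by ring.
      rewrite Rabs_Ropp.
      assert (Hb := abs_RInt_le_const (gfun A B b) t (PI/2) M).
      assert (Rabs (RInt (gfun A B b) t (PI / 2)) <= (PI/2 - t) * M).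
      { apply Hb. lra. apply exRInt_g; auto. intros; apply gbound; auto. }
      assert ((PI/2 - t) * M <= h * M) by (apply Rmult_le_compat_r; unfold t0 in *; lra).
      assert (h * M <= eps / 2).
      { replace (eps/2) with (eps / (2*M) * M) by (field; lra). apply Rmult_le_compat_r; lra. }
      lra.
Qed.

Lemma r_facts (a d : R) : -1 < a < 1 -> 0 < d -> d < sqrt (1 - a^2) ->
  let r := stark_r a d in r^2 = a^2 + d^2 /\ 0 < r /\ -r < a < r /\ r < 1.
Proof.
  intros ha hd hd2 r.
  assert (h1 : r^2 = a^2 + d^2) by (unfold r, stark_r; apply pow2_sqrt; nra).
  assert (h2 : 0 < r) by (unfold r, stark_r; apply sqrt_lt_R0; nra).
  assert (h3 : d^2 < 1 - a^2).
  { assert (0 <= 1 - a^2) by nra. rewrite <- (pow2_sqrt (1 - a^2)) by auto.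
    nra. }
  repeat split; auto; nra.
Qed.

Lemma RInt_gen_key (p : R -> R) (A B b : R) (hA : 0 < A) (hB : 0 < B) (hBA : 0 < B + b*A) :
  (forall x, p x = (A - x^2)*(B + b*x^2)) ->
  RInt_gen (fun x => / sqrt (p x)) (at_point 0) (at_left (sqrt A)) = RInt (gfun A B b) 0 (PI/2).
Proof.
  intros hp.
  assert (E : (fun x => / sqrt (p x)) = ffun A B b).
  { apply functional_extensionality; intros x; unfold ffun; rewrite hp; auto. }
  rewrite E.
  apply (@is_RInt_gen_unique R_CompleteNormedModule).
  apply Proper_StrongProper, at_point_filter.
  apply Proper_StrongProper, at_left_proper_filter.
  apply key; auto.
Qed.

Lemma Txi_eq (a d : R) : -1 < a < 1 -> 0 < d -> d < sqrt (1 - a^2) ->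
  let r := stark_r a d in
  T_xi a d = 4 * RInt (gfun (r + a) (2/r + a - r) (-1)) 0 (PI/2).
Proof.
  intros ha hd hd2 r.
  destruct (r_facts a d ha hd hd2) as (h1 & h2 & h3 & h4). fold r in h1, h2, h3, h4.
  assert (hd' : d^2 = r^2 - a^2) by lra.
  unfold T_xi. f_equal.
  assert (hx : stark_xi1 a d = sqrt (r + a)).
  { unfold stark_xi1, stark_H, stark_c. fold r. f_equal.
    replace ((- / r - a) ^ 2 - 2 * (a / r - d ^ 2 / 2 + 1)) with ((/r - r)^2).
    2:{ rewrite hd'. field. lra. }
    rewrite sqrt_pow2. field. lra.
    assert (r * r < 1) by nra.
    assert (/ r > r). { apply (Rmult_lt_reg_r r); auto. rewrite Rinv_l by lra. nra. }
    lra. }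
  rewrite hx. apply RInt_gen_key.
  - lra.
  - assert (r * r < 1) by nra.
    assert (/ r > r). { apply (Rmult_lt_reg_r r); auto. rewrite Rinv_l by lra. nra. }
    unfold Rdiv. lra.
  - assert (r * r < 1) by nra.
    assert (/ r > r). { apply (Rmult_lt_reg_r r); auto. rewrite Rinv_l by lra. nra. }
    unfold Rdiv. lra.
  - intros x. unfold stark_H, stark_c. fold r. rewrite hd'. field. lra.
Qed.

Lemma Teta_eq (a d : R) : -1 < a < 1 -> 0 < d -> d < sqrt (1 - a^2) ->
  let r := stark_r a d in
  T_eta a d = 4 * RInt (gfun (r - a) (r + a + 2/r) 1) 0 (PI/2).
Proof.
  intros ha hd hd2 r.
  destruct (r_facts a d ha hd hd2) as (h1 & h2 & h3 & h4). fold r in h1, h2, h3, h4.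
  assert (hd' : d^2 = r^2 - a^2) by lra.
  assert (r * r < 1) by nra.
  assert (hir : / r > r). { apply (Rmult_lt_reg_r r); auto. rewrite Rinv_l by lra. nra. }
  unfold T_eta. f_equal.
  assert (hx : stark_eta1 a d = sqrt (r - a)).
  { unfold stark_eta1, stark_H, stark_c. fold r. f_equal.
    replace ((- / r - a) ^ 2 - 2 * (a / r - d ^ 2 / 2 - 1)) with ((/r + r)^2).
    2:{ rewrite hd'. field. lra. }
    rewrite sqrt_pow2. field. lra. lra. }
  rewrite hx. apply RInt_gen_key.
  - lra.
  - unfold Rdiv. lra.
  - unfold Rdiv. lra.
  - intros x. unfold stark_H, stark_c. fold r. rewrite hd'. field. lra.
Qed.

Lemma div_le_helper (x y z w : R) : 0 < y -> 0 < w -> x * w <= z * y -> x / y <= z / w.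
Proof.
  intros hy hw h.
  replace (x / y) with (x * w * / (y * w)) by (field; lra).
  replace (z / w) with (z * y * / (y * w)) by (field; lra).
  apply Rmult_le_compat_r; auto. left; apply Rinv_0_lt_compat; nra.
Qed.

Definition Ff (a p u : R) := 2/p + a - p + (-1)*(p + a)*u.
Definition Gf (a p u : R) := p + a + 2/p + 1*(p - a)*u.

Lemma corner (a p q e e' : R) : -p < a < p -> p <= q -> q < 1 -> (e = 0 \/ e = 1) -> (e' = 0 \/ e' = 1) ->
  Gf a p e' * Ff a q e <= Ff a p e * Gf a q e'.
Proof.
  intros ha hpq hq he he'.
  assert (hp : 0 < p) by lra.
  unfold Ff, Gf.
  replace ((p + a + 2 / p + 1 * (p - a) * e') * (2 / q + a - q + -1 * (q + a) * e))
    with ((2 + p^2 + a*p + (p^2 - a*p)*e') * (2 - q^2 + a*q - (q^2 + a*q)*e) * / (p*q)) by (field; lra).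
  replace ((2 / p + a - p + -1 * (p + a) * e) * (q + a + 2 / q + 1 * (q - a) * e'))
    with ((2 - p^2 + a*p - (p^2 + a*p)*e) * (2 + q^2 + a*q + (q^2 - a*q)*e') * / (p*q)) by (field; lra).
  apply Rmult_le_compat_r. left; apply Rinv_0_lt_compat; nra.
  assert (hq0 : 0 <= q - p) by lra.
  assert (hpq0 : 0 < p*q) by nra.
  assert (hapq : a*p*q > - (p*q)) by (assert (0 < (a + 1)) by lra; nra).
  assert (hpqq : p*q <= q) by nra.
  destruct he as [-> | ->]; destruct he' as [-> | ->].
  - assert (0 <= (q-p)*(2*(q+p) + a*p*q)) by (apply Rmult_le_pos; auto; lra).
    match goal with |- ?L <= ?R => assert (R - L = 2*((q-p)*(2*(q+p) + a*p*q))) by ring end.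
    lra.
  - assert (0 <= (q-p)*(6*(q+p) - 2*a + 2*a*p*q)) by (apply Rmult_le_pos; auto; lra).
    match goal with |- ?L <= ?R => assert (R - L = ((q-p)*(6*(q+p) - 2*a + 2*a*p*q))) by ring end.
    lra.
  - assert (0 <= (q-p)*(6*(q+p) + 2*a + 2*a*p*q)) by (apply Rmult_le_pos; auto; lra).
    match goal with |- ?L <= ?R => assert (R - L = ((q-p)*(6*(q+p) + 2*a + 2*a*p*q))) by ring end.
    lra.
  - nra.
Qed.

Lemma Ff_pos (a r u : R) : -r < a < r -> r < 1 -> 0 <= u <= 1 -> 0 < Ff a r u.
Proof.
  intros ha hr hu. assert (r * r < 1) by nra.
  assert (hir : / r > r). { apply (Rmult_lt_reg_r r); try lra. rewrite Rinv_l by lra. nra. }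
  unfold Ff. apply pos_lin; auto; unfold Rdiv; lra.
Qed.

Lemma Gf_pos (a r u : R) : -r < a < r -> r < 1 -> 0 <= u <= 1 -> 0 < Gf a r u.
Proof.
  intros ha hr hu.
  assert (hir : / r > 0) by (apply Rinv_0_lt_compat; lra).
  unfold Gf. apply pos_lin; auto; unfold Rdiv; lra.
Qed.

Lemma lin_interp (f1 f2 : R -> R) (u : R) :
  (forall v, f1 v - f2 v = (1 - v) * (f1 0 - f2 0) + v * (f1 1 - f2 1)) ->
  f2 0 <= f1 0 -> f2 1 <= f1 1 -> 0 <= u <= 1 -> f2 u <= f1 u.
Proof. intros E h0 h1 hu. specialize (E u). nra. Qed.

Lemma compare (a p q : R) : -p < a < p -> p <= q -> q < 1 ->
  4 * RInt (gfun (p + a) (2/p + a - p) (-1)) 0 (PI/2) / (4 * RInt (gfun (p - a) (p + a + 2/p) 1) 0 (PI/2))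
  <= 4 * RInt (gfun (q + a) (2/q + a - q) (-1)) 0 (PI/2) / (4 * RInt (gfun (q - a) (q + a + 2/q) 1) 0 (PI/2)).
Proof.
  intros ha hpq hq.
  assert (hp1 : p < 1) by lra. assert (haq : -q < a < q) by lra.
  assert (hp : 0 < p) by lra.
  set (k := Rmax (Gf a p 0 / Gf a q 0) (Gf a p 1 / Gf a q 1)).
  assert (u01 : 0 <= 0 <= 1) by lra. assert (u11 : 0 <= 1 <= 1) by lra.
  assert (hk0 : 0 < k).
  { apply Rlt_le_trans with (Gf a p 0 / Gf a q 0). apply Rdiv_lt_0_compat; apply Gf_pos; auto. apply Rmax_l. }
  assert (hGe : forall e, (e = 0 \/ e = 1) -> Gf a p e <= k * Gf a q e).
  { intros e he. assert (hge : 0 < Gf a q e) by (apply Gf_pos; auto; destruct he; subst; lra).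
    assert (Gf a p e / Gf a q e <= k) by (destruct he; subst; [apply Rmax_l | apply Rmax_r]).
    replace (Gf a p e) with (Gf a p e / Gf a q e * Gf a q e) by (field; lra).
    apply Rmult_le_compat_r; lra. }
  assert (hFe : forall e, (e = 0 \/ e = 1) -> k * Ff a q e <= Ff a p e).
  { intros e he. assert (hfe : 0 < Ff a q e) by (apply Ff_pos; auto; destruct he; subst; lra).
    assert (k <= Ff a p e / Ff a q e).
    { apply Rmax_lub; apply div_le_helper; try (apply Gf_pos; auto); auto; apply corner; auto. }
    replace (Ff a p e) with (Ff a p e / Ff a q e * Ff a q e) by (field; lra).
    apply Rmult_le_compat_r; lra. }
  assert (hG : forall u, 0 <= u <= 1 -> Gf a p u <= k * Gf a q u).
  { intros u hu. apply (lin_interp (fun v => k * Gf a q v) (fun v => Gf a p v)); auto.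
    intros v; unfold Gf; ring. }
  assert (hF : forall u, 0 <= u <= 1 -> k * Ff a q u <= Ff a p u).
  { intros u hu. apply (lin_interp (fun v => Ff a p v) (fun v => k * Ff a q v)); auto.
    intros v; unfold Ff; ring. }
  set (kk := sqrt k).
  assert (hkk : 0 < kk) by (apply sqrt_lt_R0; auto).
  set (Ip := RInt (gfun (p + a) (2/p + a - p) (-1)) 0 (PI/2)).
  set (Iq := RInt (gfun (q + a) (2/q + a - q) (-1)) 0 (PI/2)).
  set (Jp := RInt (gfun (p - a) (p + a + 2/p) 1) 0 (PI/2)).
  set (Jq := RInt (gfun (q - a) (q + a + 2/q) 1) 0 (PI/2)).
  assert (hpi : 0 < PI/2) by (pose proof PI2_1; lra).
  assert (hBx : forall r, -r < a < r -> r < 1 -> 0 < 2/r + a - r /\ 0 < 2/r + a - r + -1 * (r + a)).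
  { intros r hr1 hr2. split.
    - pose proof (Ff_pos a r 0 hr1 hr2 u01) as h. unfold Ff in h. lra.
    - pose proof (Ff_pos a r 1 hr1 hr2 u11) as h. unfold Ff in h. lra. }
  assert (hBe : forall r, -r < a < r -> r < 1 -> 0 < r + a + 2/r /\ 0 < r + a + 2/r + 1 * (r - a)).
  { intros r hr1 hr2. split.
    - pose proof (Gf_pos a r 0 hr1 hr2 u01) as h. unfold Gf in h. lra.
    - pose proof (Gf_pos a r 1 hr1 hr2 u11) as h. unfold Gf in h. lra. }
  destruct (hBx p ha hp1) as [bx1 bx2]. destruct (hBx q haq hq) as [bx3 bx4].
  destruct (hBe p ha hp1) as [be1 be2]. destruct (hBe q haq hq) as [be3 be4].
  assert (hIp : 0 <= Ip).
  { apply RInt_ge_0. lra. apply exRInt_g; auto. intros x _. unfold gfun. left; apply Rinv_0_lt_compat, sqrt_lt_R0.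
    apply pos_lin; auto; apply sin2_bounds. }
  assert (hJp : 0 < Jp).
  { apply RInt_gt_0. lra. intros x _. unfold gfun. apply Rinv_0_lt_compat, sqrt_lt_R0.
    apply pos_lin; auto; apply sin2_bounds. intros; apply cont_g; auto. }
  assert (hJq : 0 < Jq).
  { apply RInt_gt_0. lra. intros x _. unfold gfun. apply Rinv_0_lt_compat, sqrt_lt_R0.
    apply pos_lin; auto; apply sin2_bounds. intros; apply cont_g; auto. }
  assert (hI : kk * Ip <= Iq).
  { unfold Ip. 
    assert (E := @RInt_scal R_CompleteNormedModule (gfun (p + a) (2/p + a - p) (-1)) 0 (PI/2) kk (exRInt_g _ _ _ bx1 bx2 0 (PI/2))).
    simpl in E. unfold scal in E; simpl in E; unfold mult in E; simpl in E. rewrite <- E.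
    apply RInt_le. lra.
    apply (@ex_RInt_scal R_CompleteNormedModule). apply exRInt_g; auto.
    apply exRInt_g; auto.
    intros x _. pose proof (sin2_bounds x) as hs.
    pose proof (Ff_pos a p _ ha hp1 hs). pose proof (Ff_pos a q _ haq hq hs).
    change (kk * / sqrt (Ff a p (sin x ^ 2)) <= / sqrt (Ff a q (sin x ^ 2))).
    unfold kk. rewrite <- !sqrt_inv. rewrite <- sqrt_mult_alt by lra. apply sqrt_le_1_alt.
    specialize (hF _ hs).
    replace (k * / Ff a p (sin x ^ 2)) with (k / Ff a p (sin x ^ 2)) by (unfold Rdiv; ring).
    replace (/ Ff a q (sin x ^ 2)) with (1 / Ff a q (sin x ^ 2)) by (unfold Rdiv; ring).
    apply div_le_helper; auto. lra. }
  assert (hJ : Jq <= kk * Jp).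
  { unfold Jp. 
    assert (E := @RInt_scal R_CompleteNormedModule (gfun (p - a) (p + a + 2/p) 1) 0 (PI/2) kk (exRInt_g _ _ _ be1 be2 0 (PI/2))).
    simpl in E. unfold scal in E; simpl in E; unfold mult in E; simpl in E. rewrite <- E.
    apply RInt_le. lra.
    apply exRInt_g; auto.
    apply (@ex_RInt_scal R_CompleteNormedModule). apply exRInt_g; auto.
    intros x _. pose proof (sin2_bounds x) as hs.
    pose proof (Gf_pos a p _ ha hp1 hs). pose proof (Gf_pos a q _ haq hq hs).
    change (/ sqrt (Gf a q (sin x ^ 2)) <= kk * / sqrt (Gf a p (sin x ^ 2))).
    unfold kk. rewrite <- !sqrt_inv. rewrite <- sqrt_mult_alt by lra. apply sqrt_le_1_alt.
    specialize (hG _ hs).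
    replace (k * / Gf a p (sin x ^ 2)) with (k / Gf a p (sin x ^ 2)) by (unfold Rdiv; ring).
    replace (/ Gf a q (sin x ^ 2)) with (1 / Gf a q (sin x ^ 2)) by (unfold Rdiv; ring).
    apply div_le_helper; auto. lra. }
  apply div_le_helper; try lra.
  assert (Ip * (kk * Jp - Jq) >= 0) by (apply Rle_ge, Rmult_le_pos; lra).
  assert (Jp * (Iq - kk * Ip) >= 0) by (apply Rle_ge, Rmult_le_pos; lra).
  nra.
Qed.

Theorem proposition3p3 (a : R) (ha : -1 < a < 1) :
  (forall d1 d2 : R, 0 < d1 -> d1 <= d2 -> d2 < sqrt (1 - a ^ 2) ->
     T_xi a d1 / T_eta a d1 <= T_xi a d2 / T_eta a d2) \/
  (forall d1 d2 : R, 0 < d1 -> d1 <= d2 -> d2 < sqrt (1 - a ^ 2) ->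
     T_xi a d2 / T_eta a d2 <= T_xi a d1 / T_eta a d1).
Proof.
  left. intros d1 d2 h1 h12 h2.
  assert (h1' : d1 < sqrt (1 - a^2)) by lra.
  assert (h2' : 0 < d2) by lra.
  pose proof (Txi_eq a d1 ha h1 h1') as E1. cbv zeta in E1.
  pose proof (Teta_eq a d1 ha h1 h1') as E2. cbv zeta in E2.
  pose proof (Txi_eq a d2 ha h2' h2) as E3. cbv zeta in E3.
  pose proof (Teta_eq a d2 ha h2' h2) as E4. cbv zeta in E4.
  rewrite E1, E2, E3, E4.
  destruct (r_facts a d1 ha h1 h1') as (f1 & f2 & f3 & f4).
  destruct (r_facts a d2 ha h2' h2) as (g1 & g2 & g3 & g4).
  apply compare; auto.
  unfold stark_r. apply sqrt_le_1_alt. nra.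
Qed.
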